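(* Let $I=[s,t]\subseteq\mathbb R/\mathbb Z$ be a generalized dyadic interval. Then: (1) there is a decomposition $I=[s,x]\cup[x,t]$ into two generalized dyadic intervals with $x$ red; (2) if at least one of $s,t$ is red, there is a decomposition $I=[s,x]\cup[x,t]$ into two generalized dyadic intervals with $x$ blue.
   Context: Let $\sigma_2(t)=2t$ on $\mathbb R/\mathbb Z$. An interval $I=[s,t]\subseteq\mathbb R/\mathbb Z$ is generalized dyadic if there is an integer $m\ge0$ such that $\sigma_2^m$ maps the open interval $(s,t)$ homeomorphically onto one of $(0,1)$, $(0,\frac23)$, $(\frac13,\frac23)$, $(\frac13,1)$. A point of $\mathbb R/\mathbb Z$ is colored red if some iterate of $\sigma_2$ maps it to $0$, and blue if some iterate maps it into the $2$-cycle $\{\frac13,\frac23\}$; endpoints of generalized dyadic intervals are red or blue. *)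

(* Defs.v *)
From Stdlib Require Import Reals.
Open Scope R_scope.

(* R/Z is modelled by the set of representatives [0,1);
   circ x is the class of the real x (x - floor x). *)
Definition circ (x : R) : R := x - IZR (Int_part x).

Definition sigma2 (p : R) : R := circ (2 * p).

(* An interval [s,t] of R/Z is given by real lifts s < t <= s + 1;
   its endpoints are circ s, circ t and its interior is the open arc
   oarc s t = image in R/Z of the real open interval (s,t). *)
Definition is_interval (s t : R) : Prop := s < t <= s + 1.

Definition oarc (s t : R) (p : R) : Prop :=
  exists y : R, s < y < t /\ p = circ y.

(* sigma_2^m maps the open arc (s,t) homeomorphically (for this
   continuous map, bijectively) onto the open arc (a,b). *)
Definition maps_onto (m : nat) (s t a b : R) : Prop :=
  (forall p q, oarc s t p -> oarc s t q ->
     Nat.iter m sigma2 p = Nat.iter m sigma2 q -> p = q) /\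
  (forall r, oarc a b r <-> exists p, oarc s t p /\ Nat.iter m sigma2 p = r).

Definition gen_dyadic (s t : R) : Prop :=
  is_interval s t /\
  exists m : nat,
    maps_onto m s t 0 1 \/ maps_onto m s t 0 (2/3) \/
    maps_onto m s t (1/3) (2/3) \/ maps_onto m s t (1/3) 1.

Definition red (x : R) : Prop :=
  exists n : nat, Nat.iter n sigma2 (circ x) = 0.

Definition blue (x : R) : Prop :=
  exists n : nat, Nat.iter n sigma2 (circ x) = 1/3 \/
                  Nat.iter n sigma2 (circ x) = 2/3.

(* Main.v *)
Require Import Defs.
From Stdlib Require Import Reals Lra Lia ZArith.
Open Scope R_scope.

Lemma IZR_small j : -1 < IZR j < 1 -> j = 0%Z.
Proof. intros [H1 H2]. apply lt_IZR in H1. apply lt_IZR in H2. lia. Qed.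

Lemma Int_part_unique z r : IZR z <= r < IZR z + 1 -> Int_part r = z.
Proof.
  intros H. destruct (base_Int_part r) as [B1 B2].
  assert (E : (Int_part r - z)%Z = 0%Z) by (apply IZR_small; rewrite minus_IZR; lra).
  lia.
Qed.

Lemma circ_range x : 0 <= circ x < 1.
Proof. unfold circ; destruct (base_Int_part x); lra. Qed.

Lemma circ_diff x y : circ x = circ y -> x - y = IZR (Int_part x - Int_part y).
Proof. unfold circ; rewrite minus_IZR; lra. Qed.

Lemma circ_plus_int x n : circ (x + IZR n) = circ x.
Proof.
  unfold circ. destruct (base_Int_part x) as [B1 B2].
  rewrite (Int_part_unique (Int_part x + n) (x + IZR n)).
  - rewrite plus_IZR; ring.
  - rewrite plus_IZR; lra.
Qed.

Lemma circ_minus_int x n : circ (x - IZR n) = circ x.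
Proof. rewrite <- (circ_plus_int (x - IZR n) n). f_equal. ring. Qed.

Lemma circ_id c : 0 <= c < 1 -> circ c = c.
Proof.
  intros H. unfold circ. rewrite (Int_part_unique 0 c); simpl; lra.
Qed.

Lemma circ_2 x : circ (2 * circ x) = circ (2 * x).
Proof.
  unfold circ at 2.
  replace (2 * (x - IZR (Int_part x))) with (2 * x + IZR (- (2 * Int_part x)))
    by (rewrite opp_IZR, mult_IZR; simpl; ring).
  apply circ_plus_int.
Qed.

Lemma iter_circ m y : Nat.iter m sigma2 (circ y) = circ (2 ^ m * y).
Proof.
  induction m.
  - simpl. f_equal. ring.
  - change (Nat.iter (S m) sigma2 (circ y)) with (sigma2 (Nat.iter m sigma2 (circ y))).
    rewrite IHm. unfold sigma2. rewrite circ_2. f_equal. simpl. ring.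
Qed.

Lemma pow2_int m : exists z, 2 ^ m = IZR z /\ exists q, (z = 3*q+1 \/ z = 3*q+2)%Z.
Proof.
  induction m.
  - exists 1%Z. split; [reflexivity|]. exists 0%Z. lia.
  - destruct IHm as [z [Hz [q Hq]]]. exists (2*z)%Z. split.
    + rewrite mult_IZR, <- Hz. simpl. ring.
    + destruct Hq as [Hq|Hq]; [exists (2*q)%Z | exists (2*q+1)%Z]; lia.
Qed.

Definition basic (a b : R) := (a = 0 /\ b = 1) \/ (a = 0 /\ b = 2/3) \/
  (a = 1/3 /\ b = 2/3) \/ (a = 1/3 /\ b = 1).

Definition GD (s t : R) := exists m k a b, basic a b /\
  2 ^ m * s = a + IZR k /\ 2 ^ m * t = b + IZR k.

Lemma maps_of m s t a b k : 0 < b - a <= 1 -> 2^m*s = a + IZR k ->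
  2^m*t = b + IZR k -> maps_onto m s t a b.
Proof.
  intros Hba Hs Ht. assert (HL : 0 < 2^m) by (apply pow_lt; lra).
  split.
  - intros p q [y1 [Hy1 ->]] [y2 [Hy2 ->]]. rewrite !iter_circ. intro E.
    apply circ_diff in E.
    assert (A1 : 2^m*s < 2^m*y1 < 2^m*t) by (split; apply Rmult_lt_compat_l; lra).
    assert (A2 : 2^m*s < 2^m*y2 < 2^m*t) by (split; apply Rmult_lt_compat_l; lra).
    assert (J : (Int_part (2 ^ m * y1) - Int_part (2 ^ m * y2))%Z = 0%Z)
      by (apply IZR_small; lra).
    rewrite J in E. simpl in E.
    assert (y1 = y2). { apply (Rmult_eq_reg_l (2^m)); lra. }
    subst; reflexivity.
  - intro r. split.
    + intros [z [Hz ->]]. exists (circ ((z + IZR k)/2^m)).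
      assert (E: 2^m*((z+IZR k)/2^m) = z + IZR k) by (field; lra).
      split.
      * exists ((z+IZR k)/2^m). split; [|reflexivity].
        split; apply (Rmult_lt_reg_l (2^m)); lra.
      * rewrite iter_circ, E, circ_plus_int. reflexivity.
    + intros [p [[y [Hy ->]] <-]]. rewrite iter_circ.
      exists (2^m*y - IZR k).
      assert (A1 : 2^m*s < 2^m*y < 2^m*t) by (split; apply Rmult_lt_compat_l; lra).
      split; [lra|]. rewrite circ_minus_int. reflexivity.
Qed.

Lemma basic_len a b : basic a b -> 0 < b - a <= 1.
Proof. unfold basic; lra. Qed.

Lemma GD_to_gen s t : GD s t -> gen_dyadic s t.
Proof.
  intros (m & k & a & b & Hab & Hs & Ht).
  assert (HL: 0 < 2^m) by (apply pow_lt; lra).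
  assert (H1: 1 <= 2^m) by (apply pow_R1_Rle; lra).
  pose proof (basic_len _ _ Hab) as Hba.
  split.
  - unfold is_interval.
    assert (E : 2^m * (t - s) = b - a) by lra.
    assert (0 < t - s).
    { destruct (Rle_or_lt (t - s) 0); [|lra].
      nra. }
    split; [lra|]. nra.
  - exists m. pose proof (maps_of m s t a b k Hba Hs Ht) as M.
    unfold basic in Hab.
    destruct Hab as [[-> ->]|[[-> ->]|[[-> ->]|[-> ->]]]]; tauto.
Qed.

Lemma gap a b w : a < b -> b <= w <= a + 1 -> ~ oarc a b (circ w).
Proof.
  intros Hab Hw [z [Hz E]]. apply circ_diff in E.
  assert (J : (Int_part w - Int_part z)%Z = 0%Z) by (apply IZR_small; lra).
  rewrite J in E. simpl in E. lra.
Qed.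

Lemma left_end a b q d : a < b <= a+1 -> 0 < d -> ~ oarc a b (circ q) ->
  (forall e, 0 < e < d -> oarc a b (circ (q + e))) -> circ q = circ a.
Proof.
  intros Hab Hd Hn He.
  destruct (base_Int_part (q - a)) as [B1 B2].
  set (n := Int_part (q - a)) in *.
  destruct (Req_dec q (a + IZR n)) as [E|E].
  - rewrite E, circ_plus_int. reflexivity.
  - exfalso. destruct (Rlt_or_le q (b + IZR n)).
    + apply Hn. exists (q - IZR n). split; [lra|]. rewrite circ_minus_int. reflexivity.
    + set (e := Rmin d (a + IZR n + 1 - q) / 2).
      assert (e1 : Rmin d (a + IZR n + 1 - q) <= d) by apply Rmin_l.
      assert (e2 : Rmin d (a + IZR n + 1 - q) <= a + IZR n + 1 - q) by apply Rmin_r.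
      assert (e3 : 0 < Rmin d (a + IZR n + 1 - q)) by (apply Rmin_glb_lt; lra).
      apply (gap a b (q + e - IZR n)); [lra| unfold e; lra |].
      rewrite circ_minus_int. apply He. unfold e; lra.
Qed.

Lemma right_end a b q d : a < b <= a+1 -> 0 < d -> ~ oarc a b (circ q) ->
  (forall e, 0 < e < d -> oarc a b (circ (q - e))) -> circ q = circ b.
Proof.
  intros Hab Hd Hn He.
  destruct (base_Int_part (q - b)) as [B1 B2].
  set (n := Int_part (q - b)) in *.
  destruct (Req_dec q (b + IZR n)) as [E|E].
  - rewrite E, circ_plus_int. reflexivity.
  - exfalso. destruct (Rlt_or_le (a + IZR n + 1) q).
    + apply Hn. exists (q - IZR (n + 1)). rewrite plus_IZR. split; [lra|].
      rewrite <- plus_IZR, circ_minus_int. reflexivity.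
    + set (e := Rmin d (q - (b + IZR n)) / 2).
      assert (e1 : Rmin d (q - (b + IZR n)) <= d) by apply Rmin_l.
      assert (e2 : Rmin d (q - (b + IZR n)) <= q - (b + IZR n)) by apply Rmin_r.
      assert (e3 : 0 < Rmin d (q - (b + IZR n))) by (apply Rmin_glb_lt; lra).
      apply (gap a b (q - e - IZR n)); [lra| unfold e; lra |].
      rewrite circ_minus_int. apply He. unfold e; lra.
Qed.

Lemma only_if m s t a b : s < t <= s + 1 -> 0 < b - a <= 1 -> maps_onto m s t a b ->
  exists k, 2^m*s = a + IZR k /\ 2^m*t = b + IZR k.
Proof.
  intros Hst Hba [Hinj Hsur].
  assert (HL: 0 < 2^m) by (apply pow_lt; lra).
  assert (Hlen : 2^m * (t - s) <= 1).
  { destruct m as [|m'].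
    - simpl. lra.
    - destruct (Rle_or_lt (2^S m' * (t - s)) 1) as [h|h]; [exact h|].
      exfalso. set (L := 2^S m') in *.
      assert (L2 : 2 <= L).
      { unfold L. simpl. assert (1 <= 2^m') by (apply pow_R1_Rle; lra). lra. }
      set (e := / L).
      assert (Le : L * e = 1) by (unfold e; field; lra).
      assert (e0 : 0 < e) by (unfold e; apply Rinv_0_lt_compat; lra).
      assert (ets : t - s - e > 0) by nra.
      set (y1 := s + (t - s - e)/2).
      assert (P : circ y1 = circ (y1 + e)).
      { apply Hinj.
        - exists y1. split; [unfold y1; lra | reflexivity].
        - exists (y1 + e). split; [unfold y1; lra | reflexivity].
        - rewrite !iter_circ. fold L.
          replace (L * (y1 + e)) with (L * y1 + IZR 1) by (simpl; lra).
          rewrite circ_plus_int. reflexivity. }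
      apply circ_diff in P.
      assert (e1 : e <= 1/2) by nra.
      assert (J : (Int_part y1 - Int_part (y1 + e))%Z = 0%Z) by (apply IZR_small; lra).
      rewrite J in P. simpl in P. lra. }
  set (u := 2^m * s) in *. set (v := 2^m * t) in *.
  assert (Huv : 0 < v - u <= 1).
  { unfold u, v. split; [|lra].
    assert (2^m * s < 2^m * t) by (apply Rmult_lt_compat_l; lra). lra. }
  assert (Heq : forall r, oarc a b r <-> oarc u v r).
  { intro r. rewrite Hsur. split.
    - intros [p [[y [Hy ->]] <-]]. rewrite iter_circ. exists (2^m * y).
      split; [|reflexivity].
      unfold u, v; split; apply Rmult_lt_compat_l; lra.
    - intros [z [Hz ->]]. exists (circ (z / 2^m)). split.
      + exists (z / 2^m). split; [|reflexivity].
        split; apply (Rmult_lt_reg_l (2^m)); try lra;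
          replace (2^m * (z / 2^m)) with z by (field; lra); unfold u, v in Hz; lra.
      + rewrite iter_circ. f_equal. field. lra. }
  assert (Cu : circ u = circ a).
  { apply (left_end a b u (v - u)); [lra|lra| |].
    - rewrite Heq. rewrite <- (circ_plus_int u 1). apply gap; simpl; lra.
    - intros e He. rewrite Heq. exists (u + e). split; [lra|reflexivity]. }
  assert (Cv : circ v = circ b).
  { apply (right_end a b v (v - u)); [lra|lra| |].
    - rewrite Heq. apply gap; lra.
    - intros e He. rewrite Heq. exists (v - e). split; [lra|reflexivity]. }
  apply circ_diff in Cu. apply circ_diff in Cv.
  set (j1 := (Int_part u - Int_part a)%Z) in *.
  set (j2 := (Int_part v - Int_part b)%Z) in *.
  assert (J : (j2 - j1)%Z = 0%Z) by (apply IZR_small; rewrite minus_IZR; lra).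
  exists j1. split; [lra|].
  replace j2 with j1 in Cv by lia. lra.
Qed.

Lemma gen_to_GD s t : gen_dyadic s t -> GD s t.
Proof.
  intros [Hst [m Hm]].
  assert (G : forall a b, basic a b -> maps_onto m s t a b -> GD s t).
  { intros a b Hab M. destruct (only_if m s t a b Hst (basic_len _ _ Hab) M) as [k [H1 H2]].
    exists m, k, a, b. auto. }
  unfold basic in G.
  destruct Hm as [M|[M|[M|M]]]; eapply G; try exact M; lra.
Qed.

Definition piece (a c : R) := exists m' k' a' b', basic a' b' /\
  2^m' * a = a' + IZR k' /\ 2^m' * c = b' + IZR k'.

Lemma compose m k a c s x : piece a c -> 2^m*s = a + IZR k -> 2^m*x = c + IZR k -> GD s x.
Proof.
  intros (m' & k' & a' & b' & Hb & Ha & Hc) Hs Hx.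
  destruct (pow2_int m') as [z [Hz _]].
  exists (m + m')%nat, (k' + z*k)%Z, a', b'. rewrite pow_add.
  split; [assumption|]. rewrite plus_IZR, mult_IZR, <- Hz. split.
  - replace (2^m*2^m'*s) with (2^m'*(2^m*s)) by ring. rewrite Hs, Rmult_plus_distr_l, Ha. ring.
  - replace (2^m*2^m'*x) with (2^m'*(2^m*x)) by ring. rewrite Hx, Rmult_plus_distr_l, Hc. ring.
Qed.

Lemma split_ok m k a b c s t : 2^m*s = a + IZR k -> 2^m*t = b + IZR k -> a < c < b ->
  piece a c -> piece c b ->
  exists x, s < x < t /\ GD s x /\ GD x t /\ 2^m * x = c + IZR k.
Proof.
  intros Hs Ht Hc P1 P2.
  assert (HL: 0 < 2^m) by (apply pow_lt; lra).
  set (x := (c + IZR k) / 2^m).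
  assert (Hx : 2^m * x = c + IZR k) by (unfold x; field; lra).
  exists x. split; [|split; [|split]].
  - split; apply (Rmult_lt_reg_l (2^m)); lra.
  - exact (compose m k a c s x P1 Hs Hx).
  - exact (compose m k c b x t P2 Hx Ht).
  - exact Hx.
Qed.

Ltac mkpiece m k a b := exists m, k, a, b; split; [unfold basic; lra|]; simpl; split; lra.

Lemma P1 : piece 0 (1/2). Proof. mkpiece 1%nat 0%Z 0 1. Qed.
Lemma P2 : piece (1/2) 1. Proof. mkpiece 1%nat 1%Z 0 1. Qed.
Lemma P3 : piece (1/2) (2/3). Proof. mkpiece 2%nat 2%Z 0 (2/3). Qed.
Lemma P4 : piece (1/3) (1/2). Proof. mkpiece 2%nat 1%Z (1/3) 1. Qed.
Lemma P5 : piece 0 (1/3). Proof. mkpiece 1%nat 0%Z 0 (2/3). Qed.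
Lemma P6 : piece (1/3) 1. Proof. mkpiece 0%nat 0%Z (1/3) 1. Qed.
Lemma P7 : piece (1/3) (2/3). Proof. mkpiece 0%nat 0%Z (1/3) (2/3). Qed.
Lemma P8 : piece (2/3) 1. Proof. mkpiece 1%nat 1%Z (1/3) 1. Qed.

Lemma no_red m k s r : (r = 1 \/ r = 2)%Z -> 2^m*s = IZR r / 3 + IZR k -> red s -> False.
Proof.
  intros Hr Hs [n Hn]. rewrite iter_circ in Hn.
  assert (Hj : 2^n * s = IZR (Int_part (2^n*s))) by (unfold circ in Hn; lra).
  set (j := Int_part (2^n*s)) in *.
  destruct (pow2_int n) as [zn [Hzn [q Hq]]].
  destruct (pow2_int m) as [zm [Hzm _]].
  assert (E : IZR (3 * zm * j) = IZR (zn * (r + 3 * k))).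
  { rewrite !mult_IZR, plus_IZR, mult_IZR, <- Hzn, <- Hzm, <- Hj.
    replace (2^n * (IZR r + 3 * IZR k)) with (3 * 2^n * (IZR r / 3 + IZR k)) by field.
    rewrite <- Hs. simpl. ring. }
  apply eq_IZR in E. destruct Hr; destruct Hq; subst; nia.
Qed.

Theorem lemma7p2 (s t : R) :
  gen_dyadic s t ->
  (exists x : R, s < x < t /\ gen_dyadic s x /\ gen_dyadic x t /\ red x) /\
  ((red s \/ red t) ->
   exists x : R, s < x < t /\ gen_dyadic s x /\ gen_dyadic x t /\ blue x).
Proof.
  intro H. apply gen_to_GD in H.
  destruct H as (m & k & a & b & Hab & Hs & Ht).
  split.
  - assert (Hx : exists x, s < x < t /\ GD s x /\ GD x t /\ 2^m * x = 1/2 + IZR k).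
    { unfold basic in Hab.
      destruct Hab as [[-> ->]|[[-> ->]|[[-> ->]|[-> ->]]]].
      - apply (split_ok m k 0 1); auto using P1, P2; lra.
      - apply (split_ok m k 0 (2/3)); auto using P1, P3; lra.
      - apply (split_ok m k (1/3) (2/3)); auto using P4, P3; lra.
      - apply (split_ok m k (1/3) 1); auto using P4, P2; lra. }
    destruct Hx as [x [Hx1 [Hx2 [Hx3 Hx4]]]].
    exists x. split; [exact Hx1|]. split; [apply GD_to_gen; exact Hx2|].
    split; [apply GD_to_gen; exact Hx3|].
    exists (S m). rewrite iter_circ.
    replace (2 ^ S m * x) with (0 + IZR (1 + 2 * k))
      by (rewrite plus_IZR, mult_IZR; replace (2^S m) with (2*2^m) by (simpl; ring); lra).
    rewrite circ_plus_int. apply circ_id. lra.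
  - intro Hred.
    assert (Hx : exists c, (c = 1/3 \/ c = 2/3) /\
               exists x, s < x < t /\ GD s x /\ GD x t /\ 2^m * x = c + IZR k).
    { unfold basic in Hab.
      destruct Hab as [[-> ->]|[[-> ->]|[[-> ->]|[-> ->]]]].
      - exists (1/3). split; [lra|]. apply (split_ok m k 0 1); auto using P5, P6; lra.
      - exists (1/3). split; [lra|]. apply (split_ok m k 0 (2/3)); auto using P5, P7; lra.
      - exfalso. destruct Hred as [Hr|Hr].
        + apply (no_red m k s 1); [lia| |exact Hr]. rewrite Hs. lra.
        + apply (no_red m k t 2); [lia| |exact Hr]. rewrite Ht. lra.
      - exists (2/3). split; [lra|]. apply (split_ok m k (1/3) 1); auto using P7, P8; lra. }
    destruct Hx as [c [Hc [x [Hx1 [Hx2 [Hx3 Hx4]]]]]].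
    exists x. split; [exact Hx1|]. split; [apply GD_to_gen; exact Hx2|].
    split; [apply GD_to_gen; exact Hx3|].
    exists m. rewrite iter_circ, Hx4, circ_plus_int, circ_id; lra.
Qed.
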